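(* Assume $\rho_\alpha^{\mathrm{dir}}<1$, let $\theta^\star$ be the unique projected Bellman fixed point, and let $x_k:=\theta_k-\theta^\star$. Fix $\varepsilon>0$ with $\beta_\varepsilon:=\rho_\alpha^{\mathrm{dir}}+\varepsilon<1$, and let $p_\varepsilon$ and $C_\varepsilon$ be as described in the context. Then for every $k\ge0$, \[ \begin{aligned} \mathbb E[p_\varepsilon(b_k+\xi_{k+1})\mid\mathcal F_k]\le{}&2\sqrt{C_\varepsilon}\,\phi_{\max}\big(R_{\max}+(1+\gamma)\|\Phi\theta^\star\|_\infty\big)\\ &+2\sqrt{C_\varepsilon}\,\phi_{\max}\|R+\gamma PV_{\theta^\star}-\Phi\theta^\star\|_\infty\\ &+4\sqrt{C_\varepsilon}(1+\gamma)\phi_{\max}^2\,p_\varepsilon(x_k). \end{aligned} \]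
   Context: Consider a finite discounted MDP with state space $\mathcal S=\{1,\dots,|\mathcal S|\}$, action space $\mathcal A=\{1,\dots,|\mathcal A|\}$, transition probabilities $P(s'\mid s,a)$, real rewards $r(s,a,s')$, expected reward $R(s,a)=\sum_{s'}P(s'\mid s,a)r(s,a,s')$, and discount factor $\gamma\in(0,1)$. Let $R_{\max}:=\max|r(s,a,s')|$. State-action vectors are ordered as $(1,1),(2,1),\dots,(|\mathcal S|,1),(1,2),\dots$, and $e_i$ is the coordinate vector of pair $i$. The matrix $P$ has rows $P(\cdot\mid s,a)$, and $R$ has entries $R(s,a)$. The set $\Theta$ is the set of deterministic stationary policies. For $\pi\in\Theta$, $\Pi^\pi$ has entry $1$ at row $s$, column $(s,\pi(s))$, and zeros elsewhere. The feature matrix $\Phi$ has full column rank and rows $\phi(s,a)^\top$. Let $\phi_{\max}:=\max\|\phi(s,a)\|_2$, and define $V_\theta(s)=\max_a\phi(s,a)^\top\theta$. The step size is $\alpha\in(0,1)$. Markovian observations: fix a behavior policy $b(a\mid s)$. The trajectory evolves as $s_{k+1}\sim P(\cdot\mid s_k,a_k)$, $r_{k+1}=r(s_k,a_k,s_{k+1})$, $a_{k+1}\sim b(\cdot\mid s_{k+1})$, with $X_k=(s_k,a_k)$. The chain has a stationary distribution $d>0$, and $D=\mathrm{diag}(d)$. The filtration is $\mathcal F_k=\sigma(\theta_0,X_0,r_1,X_1,\dots,r_k,X_k)$, and $\theta_0$ is deterministic. The update is $\theta_{k+1}=\theta_k+\alpha\phi(X_k)\big(r_{k+1}+\gamma\max_u\phi(s_{k+1},u)^\top\theta_k-\phi(X_k)^\top\theta_k\big)$.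 Define $\delta(\theta):=R+\gamma PV_\theta-\Phi\theta$, \[ \xi_{k+1}:=\phi(X_k)\big(r_{k+1}+\gamma\max_u\phi(s_{k+1},u)^\top\theta_k-\phi(X_k)^\top\theta_k-e_{X_k}^\top\delta(\theta_k)\big), \] and $b_k:=\Phi^\top(e_{X_k}e_{X_k}^\top-D)\delta(\theta_k)$. A projected Bellman fixed point is a $\theta^\star$ with $\Phi^\top D\delta(\theta^\star)=0$. Define $A_\pi:=I-\alpha\Phi^\top D\Phi+\alpha\gamma\Phi^\top DP\Pi^\pi\Phi$, and let $\rho_\alpha^{\mathrm{dir}}:=\lim_k\max_{\pi_i\in\Theta}\|A_{\pi_k}\cdots A_{\pi_1}\|^{1/k}$. When $\rho_\alpha^{\mathrm{dir}}<1$, a unique projected Bellman fixed point exists. Lyapunov norm: define \[ V_\varepsilon^\infty(x):=\lim_{t\to\infty}\sum_{\ell=0}^t\beta_\varepsilon^{-2\ell}\max_{\pi_1,\dots,\pi_\ell\in\Theta}\|A_{\pi_\ell}\cdots A_{\pi_1}x\|_2^2, \] where the $\ell=0$ term is $\|x\|_2^2$, and $p_\varepsilon:=\sqrt{V_\varepsilon^\infty}$ (a norm). Let $C_\varepsilon\ge1$ satisfy $\|x\|_2^2\le V_\varepsilon^\infty(x)\le C_\varepsilon\|x\|_2^2$ for all $x$. *)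

(* Defs.v *)
From HB Require Import structures.
From mathcomp Require Import all_boot all_order all_algebra.
From mathcomp Require Import all_classical all_reals all_analysis.
Set Implicit Arguments. Unset Strict Implicit. Unset Printing Implicit Defensive.
Import Order.TTheory GRing.Theory Num.Theory.
Local Open Scope ring_scope.
Local Open Scope classical_set_scope.

Section MDP.
Context {R : realType} {nS nA m : nat}.
Local Notation St := 'I_nS.+1.
Local Notation Ac := 'I_nA.+1.
Local Notation SA := (St * Ac)%type.
Local Notation vec := 'cV[R]_m.
Local Notation policy := {ffun St -> Ac}.

Definition dotv (u v : vec) : R := \sum_(i < m) u i ord0 * v i ord0.
Definition norm2 (v : vec) : R := Num.sqrt (\sum_(i < m) v i ord0 ^+ 2).

(* maximum of a nonnegative function over a finite type (0 if empty) *)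
Definition maxnn {T : finType} (f : T -> R) : R := \big[Num.max/0]_(t : T) f t.
Definition maxA (f : Ac -> R) : R := \big[Num.max/f ord0]_(a : Ac) f a.

Definition is_transition (P : St -> Ac -> St -> R) : Prop :=
  (forall s a s', 0 <= P s a s') /\ (forall s a, \sum_(s' : St) P s a s' = 1).
Definition is_behavior (b : St -> Ac -> R) : Prop :=
  (forall s a, 0 <= b s a) /\ (forall s, \sum_(a : Ac) b s a = 1).
Definition is_stationary (P : St -> Ac -> St -> R) (b : St -> Ac -> R)
    (d : St -> Ac -> R) : Prop :=
  [/\ (forall s a, 0 < d s a),
      \sum_(x : SA) d x.1 x.2 = 1 &
      forall s' a', d s' a' = \sum_(x : SA) d x.1 x.2 * P x.1 x.2 s' * b s' a'].

(* feature matrix Phi (rows phi(s,a)^T, rows listed in enum order of SA) *)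
Definition Phimx (phi : St -> Ac -> vec) : 'M[R]_(#|{: SA}|, m) :=
  \matrix_(i, j) phi (enum_val i).1 (enum_val i).2 j ord0.

Variables (P : St -> Ac -> St -> R) (r : St -> Ac -> St -> R)
          (phi : St -> Ac -> vec) (d : St -> Ac -> R) (gamma alpha : R).

Definition Qf (th : vec) (s : St) (a : Ac) : R := dotv (phi s a) th.
Definition Vf (th : vec) (s : St) : R := maxA (Qf th s).
Definition Rexp (s : St) (a : Ac) : R := \sum_(s' : St) P s a s' * r s a s'.
Definition delta (th : vec) (s : St) (a : Ac) : R :=
  Rexp s a + gamma * (\sum_(s' : St) P s a s' * Vf th s') - Qf th s a.

Definition Rmax : R := maxnn (fun t : (SA * St)%type => `| r t.1.1 t.1.2 t.2 |).
Definition phimax : R := maxnn (fun x : SA => norm2 (phi x.1 x.2)).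
Definition supnorm (f : St -> Ac -> R) : R := maxnn (fun x : SA => `| f x.1 x.2 |).

(* Phi^T D v *)
Definition PhiTD (v : St -> Ac -> R) : vec :=
  \sum_(y : SA) (d y.1 y.2 * v y.1 y.2) *: phi y.1 y.2.

Definition td_update (th : vec) (x : SA) (s' : St) : vec :=
  th + alpha *: ((r x.1 x.2 s' + gamma * Vf th s' - Qf th x.1 x.2) *: phi x.1 x.2).

(* xi_{k+1} and b_k, with theta_k = th, X_k = x, s_{k+1} = s' *)
Definition xi (th : vec) (x : SA) (s' : St) : vec :=
  (r x.1 x.2 s' + gamma * Vf th s' - Qf th x.1 x.2 - delta th x.1 x.2) *: phi x.1 x.2.
(* Phi^T (e_x e_x^T - D) delta(theta) *)
Definition bk (th : vec) (x : SA) : vec :=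
  delta th x.1 x.2 *: phi x.1 x.2 - PhiTD (delta th).

(* A_pi = I - alpha Phi^T D Phi + alpha gamma Phi^T D P Pi^pi Phi *)
Definition Apol (pi : policy) : 'M[R]_m :=
  1%:M - alpha *: (\sum_(y : SA) d y.1 y.2 *: (phi y.1 y.2 *m (phi y.1 y.2)^T))
  + (alpha * gamma) *: (\sum_(y : SA) d y.1 y.2 *:
        (phi y.1 y.2 *m (\sum_(s' : St) P y.1 y.2 s' *: phi s' (pi s'))^T)).

(* prodA [:: pi_1; ...; pi_k] = A_{pi_k} ... A_{pi_1} *)
Definition prodA (t : seq policy) : 'M[R]_m :=
  foldl (fun M pi => Apol pi *m M) 1%:M t.

Definition opnorm (M : 'M[R]_m) : R :=
  sup [set norm2 (M *m x) | x in [set x : vec | norm2 x <= 1]].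

Definition jsr_k (k : nat) : R :=
  maxnn (fun t : k.-tuple policy => opnorm (prodA t)).

(* partial sums defining V_eps^infty(x), with beta = beta_eps *)
Definition lyap_partial (beta : R) (x : vec) (t : nat) : R :=
  \sum_(l < t.+1) beta ^- (2 * l) *
     maxnn (fun tp : l.-tuple policy => norm2 (prodA tp *m x) ^+ 2).

(* theta_k computed along a history X_0, X_1, ..., X_k = X0 :: h *)
Fixpoint theta_run (th : vec) (x : SA) (h : seq SA) : vec :=
  match h with
  | [::] => th
  | y :: h' => theta_run (td_update th x y.1) y h'
  end.

End MDP.

Section Traj.
Context {R : realType} {nS nA : nat}.
Local Notation St := 'I_nS.+1.
Local Notation Ac := 'I_nA.+1.
Local Notation SA := (St * Ac)%type.
Variables (P : St -> Ac -> St -> R) (b : St -> Ac -> R).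

(* the history X_0 :: h has positive probability under the chain
   (for an arbitrary initial law charging X_0) *)
Definition reachable (x0 : SA) (h : seq SA) : bool :=
  path (fun x y : SA => (0 < P x.1 x.2 y.1) && (0 < b y.1 y.2)) x0 h.

(* E[ g(s_{k+1}, a_{k+1}) | F_k ] when X_k = x : the Markov chain
   draws s_{k+1} ~ P(.|X_k), a_{k+1} ~ b(.|s_{k+1}) independently of the
   rest of F_k *)
Definition condE_next (x : SA) (g : St -> Ac -> R) : R :=
  \sum_(s' : St) \sum_(a' : Ac) P x.1 x.2 s' * b s' a' * g s' a'.
End Traj.

(* Main.v *)
Require Import Defs.
From HB Require Import structures.
From mathcomp Require Import all_boot all_order all_algebra.
From mathcomp Require Import all_classical all_reals all_analysis.
From mathcomp Require Import lra ring.
Import Order.TTheory GRing.Theory Num.Theory numFieldNormedType.Exports.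
Local Open Scope ring_scope.

Section Aux.
Context {R : realType}.

Lemma bigmax_ge {T : finType} (x0 : R) (f : T -> R) t :
  f t <= \big[Num.max/x0]_(u : T) f u.
Proof. by rewrite (bigD1 t) //= le_max lexx. Qed.

Lemma bigmax_leB {T : finType} (x0 B : R) (f : T -> R) :
  x0 <= B -> (forall t, f t <= B) -> \big[Num.max/x0]_(u : T) f u <= B.
Proof.
move=> h0 hf; apply: (big_ind (fun x => x <= B)) => //.
by move=> x y hx hy; rewrite ge_max hx hy.
Qed.

Lemma maxA_bound nA (f : 'I_nA.+1 -> R) B :
  (forall a, `|f a| <= B) -> `|Defs.maxA f| <= B.
Proof.
move=> hf; rewrite /Defs.maxA ler_norml; apply/andP; split.
  have := bigmax_ge (f ord0) f ord0.
  have := hf ord0; rewrite ler_norml => /andP[]. lra.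
apply: bigmax_leB => [|a].
  by have := hf ord0; rewrite ler_norml => /andP[].
by have := hf a; rewrite ler_norml => /andP[].
Qed.

Lemma maxA_diff nA (f g : 'I_nA.+1 -> R) B :
  (forall a, `|f a - g a| <= B) -> `|Defs.maxA f - Defs.maxA g| <= B.
Proof.
have key : forall f g : 'I_nA.+1 -> R, (forall a, `|f a - g a| <= B) ->
    Defs.maxA f <= Defs.maxA g + B.
  move=> f1 g1 hf; rewrite /Defs.maxA; apply: bigmax_leB => [|a].
    have := hf ord0; rewrite ler_norml => /andP[_ h].
    have := bigmax_ge (g1 ord0) g1 ord0; lra.
  have := hf a; rewrite ler_norml => /andP[_ h].
  have := bigmax_ge (g1 ord0) g1 a; lra.
move=> hf; rewrite ler_norml; apply/andP; split.
  have := key g f (fun a => ltac:(rewrite distrC; exact: hf a)); lra.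
have := key f g hf; lra.
Qed.
End Aux.

Section Aux2.
Context {R : realType} {m : nat}.
Implicit Types u v : 'cV[R]_m.

Definition sq2 v : R := \sum_(i < m) v i ord0 ^+ 2.

Lemma sq2_ge0 v : 0 <= sq2 v.
Proof. by apply: sumr_ge0 => i _; exact: sqr_ge0. Qed.

Lemma CS_sq u v : dotv u v ^+ 2 <= sq2 u * sq2 v.
Proof.
set a := fun i => u i ord0; set b := fun i => v i ord0.
have H0 : 0 <= \sum_(i < m) \sum_(j < m) (a i * b j - a j * b i) ^+ 2.
  by apply: sumr_ge0 => i _; apply: sumr_ge0 => j _; exact: sqr_ge0.
have E : forall i j, (a i * b j - a j * b i) ^+ 2 =
   a i ^+ 2 * b j ^+ 2 + a j ^+ 2 * b i ^+ 2 - (a i * b i * (a j * b j)) *+ 2.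
  by move=> i j; rewrite mulr2n; ring.
have S1 : \sum_(i < m) \sum_(j < m) a i ^+ 2 * b j ^+ 2 = sq2 u * sq2 v.
  by rewrite /sq2 mulr_suml; apply: eq_bigr => i _; rewrite mulr_sumr.
have S2 : \sum_(i < m) \sum_(j < m) a j ^+ 2 * b i ^+ 2 = sq2 u * sq2 v.
  by rewrite exchange_big.
have S3 : \sum_(i < m) \sum_(j < m) a i * b i * (a j * b j) = dotv u v ^+ 2.
  by rewrite expr2 /dotv mulr_suml; apply: eq_bigr => i _; rewrite mulr_sumr.
move: H0; under eq_bigr => i _ do under eq_bigr => j _ do rewrite E.
under eq_bigr => i _ do rewrite sumrB big_split /= sumrMnl.
rewrite sumrB big_split /= sumrMnl S1 S2 S3.
lra.
Qed.

Lemma norm2_ge0 v : 0 <= norm2 v.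
Proof. exact: sqrtr_ge0. Qed.

Lemma norm2_sq v : norm2 v ^+ 2 = sq2 v.
Proof. by rewrite /norm2 sqr_sqrtr // sq2_ge0. Qed.

Lemma CS u v : `|dotv u v| <= norm2 u * norm2 v.
Proof.
rewrite -ler_sqr ?nnegrE ?mulr_ge0 ?norm2_ge0 //.
by rewrite exprMn !norm2_sq real_normK ?num_real // CS_sq.
Qed.

Lemma sq2_add u v : sq2 (u + v) = sq2 u + dotv u v *+ 2 + sq2 v.
Proof.
rewrite /sq2 /dotv -sumrMnl -!big_split /=; apply: eq_bigr => i _.
by rewrite mxE sqrrD.
Qed.

Lemma norm2_triangle u v : norm2 (u + v) <= norm2 u + norm2 v.
Proof.
rewrite -ler_sqr ?nnegrE ?addr_ge0 ?norm2_ge0 //.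
rewrite norm2_sq sq2_add sqrrD !norm2_sq.
have := CS u v; have := ler_norm (dotv u v).
move: (norm2 u * norm2 v) => w h1 h2.
have : dotv u v <= w by exact: le_trans h1 h2.
rewrite !mulr2n; lra.
Qed.

Lemma norm2_scale (c : R) v : norm2 (c *: v) = `|c| * norm2 v.
Proof.
rewrite /norm2 -sqrtr_sqr -sqrtrM ?sqr_ge0 //; congr Num.sqrt.
by rewrite mulr_sumr; apply: eq_bigr => i _; rewrite mxE exprMn.
Qed.

Lemma norm2_opp v : norm2 (- v) = norm2 v.
Proof. by rewrite -scaleN1r norm2_scale normrN normr1 mul1r. Qed.

Lemma norm2_sub u v : norm2 (u - v) <= norm2 u + norm2 v.
Proof. by rewrite -(norm2_opp v); exact: norm2_triangle. Qed.

Lemma norm2_sum (I : finType) (F : I -> 'cV[R]_m) :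
  norm2 (\sum_(i : I) F i) <= \sum_(i : I) norm2 (F i).
Proof.
elim/big_rec2: _ => [|i y x _ h].
  by rewrite /norm2 /sq2 big1 ?sqrtr0 // => i _; rewrite mxE expr0n.
exact: le_trans (norm2_triangle _ _) (lerD (lexx _) h).
Qed.

Lemma dotvBr w u v : dotv w u - dotv w v = dotv w (u - v).
Proof.
by rewrite /dotv -sumrB; apply: eq_bigr => i _; rewrite !mxE mulrBr.
Qed.
End Aux2.

Lemma normle {R : realType} (x B : R) : `|x| <= B <-> (- B <= x /\ x <= B).
Proof. by rewrite ler_norml; split => [/andP[]|[-> ->]]. Qed.

Lemma condE_bound {R : realType} nS nA (P : 'I_nS.+1 -> 'I_nA.+1 -> 'I_nS.+1 -> R)
  (b : 'I_nS.+1 -> 'I_nA.+1 -> R) x g B :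
  is_transition P -> is_behavior b -> (forall s a, g s a <= B) ->
  condE_next P b x g <= B.
Proof.
move=> [hP0 hP1] [hb0 hb1] hg; rewrite /condE_next.
apply: (@le_trans _ _ (\sum_(s' < nS.+1) \sum_(a' < nA.+1) P x.1 x.2 s' * b s' a' * B)).
  apply: ler_sum => s _; apply: ler_sum => a _.
  by apply: ler_wpM2l; [exact: mulr_ge0|exact: hg].
rewrite (eq_bigr (fun s' => P x.1 x.2 s' * B)).
  by rewrite -mulr_suml hP1 mul1r.
move=> s _; rewrite -mulr_suml -mulr_sumr hb1 mulr1; done.
Qed.

Local Open Scope classical_set_scope.

Theorem lemma6 (R : realType) (nS nA m : nat)
  (P r : 'I_nS.+1 -> 'I_nA.+1 -> 'I_nS.+1 -> R)
  (bpol d : 'I_nS.+1 -> 'I_nA.+1 -> R)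
  (phi : 'I_nS.+1 -> 'I_nA.+1 -> 'cV[R]_m)
  (gamma alpha : R)
  (hgamma : 0 < gamma < 1) (halpha : 0 < alpha < 1)
  (hP : is_transition P) (hb : is_behavior bpol) (hd : is_stationary P bpol d)
  (hrank : \rank (Phimx phi) = m)
  (rho : R)
  (hrho : (fun k : nat => jsr_k P phi d gamma alpha k `^ (k%:R)^-1) @ \oo --> rho)
  (hrho1 : rho < 1)
  (thetas : 'cV[R]_m) (hfix : PhiTD phi d (delta P r phi gamma thetas) = 0)
  (eps : R) (heps : 0 < eps) (hbeta : rho + eps < 1)
  (V : 'cV[R]_m -> R)
  (hV : forall x, (fun t : nat => lyap_partial P phi d gamma alpha (rho + eps) x t)
                    @ \oo --> V x)
  (C : R) (hC1 : 1 <= C)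
  (hC : forall x, norm2 x ^+ 2 <= V x <= C * norm2 x ^+ 2)
  (theta0 : 'cV[R]_m) (X0 : 'I_nS.+1 * 'I_nA.+1) (h : seq ('I_nS.+1 * 'I_nA.+1))
  (hreach : reachable P bpol X0 h) :
  let thetak := theta_run r phi gamma alpha theta0 X0 h in
  let Xk := last X0 h in
  let p := fun x : 'cV[R]_m => Num.sqrt (V x) in
  let phm := phimax phi in
  condE_next P bpol Xk
    (fun s' _ => p (bk P r phi d gamma thetak Xk + xi P r phi gamma thetak Xk s'))
  <= 2 * Num.sqrt C * phm
         * (Rmax r + (1 + gamma) * supnorm (Qf phi thetas))
     + 2 * Num.sqrt C * phm * supnorm (delta P r phi gamma thetas)
     + 4 * Num.sqrt C * (1 + gamma) * phm ^+ 2 * p (thetak - thetas).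

Proof.
cbv zeta beta.
set th := theta_run r phi gamma alpha theta0 X0 h.
set x := last X0 h.
set phm := phimax phi.
case: hgamma => /andP[g0 g1].
have [hd0 hd1 _] := hd.
set n := norm2 (th - thetas).
set S := supnorm (Qf phi thetas).
set Dst := supnorm (delta P r phi gamma thetas).
have n0 : 0 <= n by exact: norm2_ge0.
have phm0 : 0 <= phm.
  apply: le_trans (norm2_ge0 (phi ord0 ord0)) _.
  exact: (bigmax_ge 0 (fun y : 'I_nS.+1 * 'I_nA.+1 => norm2 (phi y.1 y.2)) (ord0, ord0)).
have phile : forall s a, norm2 (phi s a) <= phm.
  by move=> s a; exact: (bigmax_ge 0 (fun y : 'I_nS.+1 * 'I_nA.+1 => norm2 (phi y.1 y.2)) (s, a)).
have S0 : 0 <= S.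
  apply: le_trans (normr_ge0 (Qf phi thetas ord0 ord0)) _.
  exact: (bigmax_ge 0 (fun y : 'I_nS.+1 * 'I_nA.+1 => `|Qf phi thetas y.1 y.2|) (ord0, ord0)).
have Sle : forall s a, `|Qf phi thetas s a| <= S.
  by move=> s a; exact: (bigmax_ge 0 (fun y : 'I_nS.+1 * 'I_nA.+1 => `|Qf phi thetas y.1 y.2|) (s, a)).
have D0 : 0 <= Dst.
  apply: le_trans (normr_ge0 (delta P r phi gamma thetas ord0 ord0)) _.
  exact: (bigmax_ge 0 (fun y : 'I_nS.+1 * 'I_nA.+1 => `|delta P r phi gamma thetas y.1 y.2|) (ord0, ord0)).
have Dle : forall s a, `|delta P r phi gamma thetas s a| <= Dst.
  by move=> s a; exact: (bigmax_ge 0 (fun y : 'I_nS.+1 * 'I_nA.+1 => `|delta P r phi gamma thetas y.1 y.2|) (s, a)).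
have R0 : 0 <= Rmax r.
  apply: le_trans (normr_ge0 (r ord0 ord0 ord0)) _.
  exact: (bigmax_ge 0 (fun t : ('I_nS.+1 * 'I_nA.+1) * 'I_nS.+1 => `|r t.1.1 t.1.2 t.2|) ((ord0, ord0), ord0)).
have Rle : forall s a s', `|r s a s'| <= Rmax r.
  by move=> s a s'; exact: (bigmax_ge 0 (fun t : ('I_nS.+1 * 'I_nA.+1) * 'I_nS.+1 => `|r t.1.1 t.1.2 t.2|) ((s, a), s')).
have Qd : forall s a, `|Qf phi th s a - Qf phi thetas s a| <= phm * n.
  move=> s a; rewrite /Qf dotvBr; apply: le_trans (CS _ _) _.
  by apply: ler_wpM2r => //; exact: phile.
have Qb : forall s a, `|Qf phi th s a| <= S + phm * n.
  move=> s a; have := Qd s a; have := Sle s a; rewrite !normle; lra.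
have Vd : forall s, `|Vf phi th s - Vf phi thetas s| <= phm * n.
  by move=> s; apply: maxA_diff => a; exact: Qd.
have Vb : forall s, `|Vf phi th s| <= S + phm * n.
  by move=> s; apply: maxA_bound => a; exact: Qb.
have PVd : forall s a, `|\sum_(s' < nS.+1) P s a s' * Vf phi th s' -
     \sum_(s' < nS.+1) P s a s' * Vf phi thetas s'| <= phm * n.
  move=> s a; rewrite -sumrB; apply: le_trans; first exact: ler_norm_sum.
  apply: (@le_trans _ _ (\sum_(s' < nS.+1) P s a s' * (phm * n))).
    apply: ler_sum => s' _; rewrite -mulrBr normrM ger0_norm; last by case: hP.
    by apply: ler_wpM2l; [case: hP|exact: Vd].
  by rewrite -mulr_suml; case: hP => _ ->; rewrite mul1r.
have db : forall s a, `|delta P r phi gamma th s a| <= Dst + (1 + gamma) * (phm * n).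
  move=> s a.
  have E : delta P r phi gamma th s a = delta P r phi gamma thetas s a +
     (gamma * (\sum_(s' < nS.+1) P s a s' * Vf phi th s' -
     \sum_(s' < nS.+1) P s a s' * Vf phi thetas s') - (Qf phi th s a - Qf phi thetas s a)).
    rewrite /delta; ring.
  rewrite E; move: (PVd s a) (Qd s a) (Dle s a).
  move: (\sum_(s' < nS.+1) P s a s' * Vf phi th s' - \sum_(s' < nS.+1) P s a s' * Vf phi thetas s') => X.
  rewrite !normle => -[h1 h2] [h3 h4] [h5 h6].
  have h7 : gamma * X <= gamma * (phm * n) by apply: ler_wpM2l => //; lra.
  have h8 : gamma * (- (phm * n)) <= gamma * X by apply: ler_wpM2l => //; lra.
  lra.
have Tb : norm2 (PhiTD phi d (delta P r phi gamma th)) <= (Dst + (1 + gamma) * (phm * n)) * phm.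
  rewrite /PhiTD; apply: le_trans; first exact: norm2_sum.
  apply: (@le_trans _ _ (\sum_(y : 'I_nS.+1 * 'I_nA.+1) d y.1 y.2 * ((Dst + (1 + gamma) * (phm * n)) * phm))).
    apply: ler_sum => y _; rewrite norm2_scale normrM (ger0_norm (ltW (hd0 _ _))) -mulrA.
    apply: ler_wpM2l; first exact: ltW (hd0 _ _).
    apply: ler_pM; [exact: normr_ge0|exact: norm2_ge0|exact: db|exact: phile].
  by rewrite -mulr_suml hd1 mul1r.
have key : forall s', norm2 (bk P r phi d gamma th x + xi P r phi gamma th x s') <=
   phm * (Rmax r + (1 + gamma) * S) + phm * Dst + 2 * (1 + gamma) * phm ^+ 2 * n.
  move=> s'.
  have E : bk P r phi d gamma th x + xi P r phi gamma th x s' =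
    (r x.1 x.2 s' + gamma * Vf phi th s' - Qf phi th x.1 x.2) *: phi x.1 x.2
    - PhiTD phi d (delta P r phi gamma th).
    rewrite /bk /xi; move: (delta P r phi gamma th x.1 x.2) (r x.1 x.2 s' + gamma * Vf phi th s' - Qf phi th x.1 x.2) => DD c0.
    by rewrite scalerBl [LHS]addrC [LHS]addrA subrK.
  rewrite E; apply: le_trans (norm2_sub _ _) _; rewrite norm2_scale.
  have cb : `|r x.1 x.2 s' + gamma * Vf phi th s' - Qf phi th x.1 x.2| <=
      Rmax r + (1 + gamma) * (S + phm * n).
    move: (Rle x.1 x.2 s') (Vb s') (Qb x.1 x.2); rewrite !normle.
    move=> [h1 h2] [h3 h4] [h5 h6].
    have h7 : gamma * Vf phi th s' <= gamma * (S + phm * n) by apply: ler_wpM2l => //; lra.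
    have h8 : gamma * (- (S + phm * n)) <= gamma * Vf phi th s' by apply: ler_wpM2l => //; lra.
    lra.
  have c1 := ler_pM (normr_ge0 _) (norm2_ge0 _) cb (phile x.1 x.2).
  apply: le_trans (lerD c1 Tb) _.
  rewrite le_eqVlt; apply/orP; left; apply/eqP; ring.
have C0 : 0 <= C by lra.
have sC0 : 0 <= Num.sqrt C by exact: sqrtr_ge0.
have psq : forall v, Num.sqrt (V v) <= Num.sqrt C * norm2 v.
  move=> v; have /andP[_ h2] := hC v.
  apply: le_trans (ler_wsqrtr h2) _.
  by rewrite sqrtrM // sqrtr_sqr ger0_norm // norm2_ge0.
have nsq : n <= Num.sqrt (V (th - thetas)).
  have /andP[h1 _] := hC (th - thetas).
  apply: le_trans (ler_wsqrtr h1); rewrite sqrtr_sqr ger0_norm //.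
apply: condE_bound hP hb _ => s' _.
apply: le_trans (psq _) _.
apply: le_trans (ler_wpM2l sC0 (key s')) _.
move: (Num.sqrt (V (th - thetas))) nsq => q nq.
have g2 : 0 <= 1 + gamma by lra.
have e1 : 0 <= phm * (Rmax r + (1 + gamma) * S).
  by apply: mulr_ge0 => //; apply: addr_ge0 => //; exact: mulr_ge0.
have e2 : 0 <= phm * Dst by exact: mulr_ge0.
have e3 : 0 <= (1 + gamma) * phm ^+ 2 by apply: mulr_ge0 => //; exact: sqr_ge0.
have e4 : (1 + gamma) * phm ^+ 2 * n <= (1 + gamma) * phm ^+ 2 * q by exact: ler_wpM2l.
have e5 : 0 <= (1 + gamma) * phm ^+ 2 * n by exact: mulr_ge0.
set A1 := phm * (Rmax r + (1 + gamma) * S) in e1 *.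
set A2 := phm * Dst in e2 *.
set A3 := (1 + gamma) * phm ^+ 2 * n in e4 e5 *.
set A4 := (1 + gamma) * phm ^+ 2 * q in e4 *.
have -> : 2 * Num.sqrt C * phm * (Rmax r + (1 + gamma) * S) = 2 * Num.sqrt C * A1 by rewrite /A1; ring.
have -> : 2 * Num.sqrt C * phm * Dst = 2 * Num.sqrt C * A2 by rewrite /A2; ring.
have -> : 4 * Num.sqrt C * (1 + gamma) * phm ^+ 2 * q = 4 * Num.sqrt C * A4 by rewrite /A4; ring.
have -> : 2 * (1 + gamma) * phm ^+ 2 * n = 2 * A3 by rewrite /A3; ring.
nra.
Qed.
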